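(* Let $T$ be a finite abelian group, written multiplicatively, and let $F: T\times T\to \{z\in\mathbb{C}: |z|=1\}$ be a map satisfying, for all $K,K_1,K_2,L,L_1,L_2\in T$, $$F(K_1K_2,L)=F(K_1,L)F(K_2,L),\qquad F(K,L_1L_2)=F(K,L_1)F(K,L_2),\qquad F(K,L)=\overline{F(L,K)}.$$ Let $\mathcal{S}$ be a subgroup of $T$ and let $\mathcal{U}=\{J\in\mathcal{S} : F(K,J)=1 \text{ for all } K\in\mathcal{S}\}$. Suppose $X\in T$ satisfies $F(X,K)=1$ for all $K\in\mathcal{U}$. Then there exists $R\in X\mathcal{S}$ such that $F(R,K)=1$ for all $K\in\mathcal{S}$, and such an element $R$ is unique up to multiplication by elements of $\mathcal{U}$.
   Context: This is the group-theoretic content of the statement that untwisted orbit representatives exist: here $T$ plays the role of the group of simple currents fixing a given primary field $a$, $F(K,L)=F(a,K,L)$ is the simple current twist on $a$, $\mathcal{S}$ is the stabilizer of $a$ in the extension group, $\mathcal{U}$ is the untwisted stabilizer, and $X$ is a representative (fixing $a$) of a coset of the extension group. *)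

(* Defs.v *)
From HB Require Import structures.
From mathcomp Require Import all_boot all_order all_algebra all_fingroup all_field.
Set Implicit Arguments. Unset Strict Implicit. Unset Printing Implicit Defensive.
Import GRing.Theory Num.Theory.

Local Open Scope group_scope.

Definition untwisted (gT : finGroupType) (F : gT -> gT -> algC) (S : {set gT})
  : {set gT} :=
  [set J in S | [forall K in S, F K J == 1%R]].

(* Main.v *)
Require Import Defs.
From HB Require Import structures.
From mathcomp Require Import all_boot all_order all_algebra all_fingroup all_field.
Import GRing.Theory Num.Theory.
Local Open Scope ring_scope.

Lemma sum_char (gT : finGroupType) (S : {group gT}) (g : gT -> algC)
  (gM : forall a b, a \in S -> b \in S -> g (a * b)%g = g a * g b) K0 :
  K0 \in S -> g K0 != 1 -> \sum_(K in S) g K = 0.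
Proof.
move=> K0S gK0.
have e : \sum_(K in S) g K = g K0 * \sum_(K in S) g K.
  rewrite {1}(reindex_inj (mulgI K0)) /= mulr_sumr.
  apply: eq_big => [K|K]; first by rewrite /= groupMl.
  by rewrite /= groupMl // => KS; rewrite gM.
have : (1 - g K0) * \sum_(K in S) g K = 0 by rewrite mulrBl -e mul1r subrr.
by move/eqP; rewrite mulf_eq0 subr_eq0 eq_sym (negbTE gK0) /= => /eqP.
Qed.

Theorem mainTheorem1 (gT : finGroupType) (F : gT -> gT -> algC)
  (S : {group gT}) (X : gT) :
  abelian [set: gT] ->
  (forall K L, `|F K L| = 1%R) ->
  (forall K1 K2 L, F (K1 * K2)%g L = (F K1 L * F K2 L)%R) ->
  (forall K L1 L2, F K (L1 * L2)%g = (F K L1 * F K L2)%R) ->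
  (forall K L, F K L = (F L K)^*%R) ->
  (forall K, K \in untwisted F S -> F X K = 1%R) ->
  exists2 R, R \in (X *: S)%g &
    (forall K, K \in S -> F R K = 1%R) /\
    (forall R', R' \in (X *: S)%g ->
       ((forall K, K \in S -> F R' K = 1%R) <-> R' \in (R *: untwisted F S)%g)).
Proof.
move=> _ Fn Fl Fr Fc HX.
have Fsym K L : (F K L == 1) = (F L K == 1).
  by rewrite Fc; apply/eqP/eqP => [e|->]; [rewrite -[F L K]conjCK e conjC1 | rewrite conjC1].
have inU J : J \in untwisted F S = (J \in S) && [forall K in S, F J K == 1].
  rewrite inE; congr (_ && _); apply/forallP/forallP => H K; have := H K;
  by rewrite Fsym.
have [J JS HJ] : exists2 J, J \in S & forall K, K \in S -> F K (X * J)%g = 1.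
  pose T := \sum_(J in S) \sum_(K in S) F K (X * J)%g.
  have ET : T = #|S|%:R *+ #|untwisted F S|.
    rewrite /T exchange_big /=.
    under eq_bigr => K KS do rewrite (eq_bigr (fun J => F K X * F K J)) //= -mulr_sumr.
    rewrite -sumr_const (bigID (fun K => K \in untwisted F S)) /=.
    rewrite [X in _ + X]big1 ?addr0; last first.
      move=> K /andP [KS KU].
      have : ~~ [forall J in S, F K J == 1] by rewrite inU KS in KU.
      rewrite negb_forall_in => /existsP [J0 /andP [J0S FJ0]].
      by rewrite (@sum_char _ S (F K) (fun a b _ _ => Fr K a b) J0 J0S FJ0) mulr0.
    apply: eq_big => [K|K].
      by rewrite /= inU; case: (K \in S).
    move=> /andP [KS KU].
    have FKX : F K X = 1 by apply/eqP; rewrite Fsym; apply/eqP; exact: HX.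
    rewrite FKX mul1r (eq_bigr (fun _ => 1)) ?sumr_const //.
    by move: KU; rewrite inU KS /= => /forall_inP H J JS; apply/eqP; exact: H.
  have U1 : (1%g : gT) \in untwisted F S.
    rewrite inE group1; apply/forall_inP => K KS.
    have nz : F K 1%g != 0 by rewrite -normr_eq0 Fn oner_eq0.
    by apply/eqP/(mulfI nz); rewrite mulr1 -Fr mulg1.
  have T0 : T != 0.
    rewrite ET -mulr_natr -natrM pnatr_eq0 muln_eq0 negb_or -!lt0n cardG_gt0 /=.
    by apply/card_gt0P; exists 1%g.
  case: (pickP [pred J in S | \sum_(K in S) F K (X * J)%g != 0]) => [J /andP [JS HJ]|H].
    exists J => // K KS; apply/eqP; apply: contraNT HJ => HK.
    by rewrite (@sum_char _ S (fun K => F K (X * J)%g) (fun a b _ _ => Fl a b _) K KS HK).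
  move: T0; rewrite /T big1 ?eqxx // => J JS.
  by move: (H J); rewrite /= JS /= => /negbFE/eqP.
have F1l K : F 1%g K = 1.
  have nz : F 1%g K != 0 by rewrite -normr_eq0 Fn oner_eq0.
  by apply/(mulfI nz); rewrite mulr1 -Fl mulg1.
have FV x K : F x^-1%g K = 1 -> F x K = 1.
  by move=> e; rewrite -[F x K]mul1r -e -Fl mulVg F1l.
have FV' x K : F x K = 1 -> F x^-1%g K = 1.
  by move=> e; rewrite -[F _ K]mulr1 -e -Fl mulVg F1l.
exists (X * J)%g; first by rewrite mem_lcoset mulKg.
split=> [K KS|R']; first by apply/eqP; rewrite Fsym; apply/eqP; exact: HJ.
rewrite !mem_lcoset => R'S; split.
  move=> H; rewrite inU; apply/andP; split.
    by rewrite invMg -mulgA groupM ?groupV.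
  apply/forall_inP => K KS; rewrite Fl H // mulr1; apply/eqP/FV'.
  by apply/eqP; rewrite Fsym; apply/eqP; exact: HJ.
rewrite inU => /andP [_ /forall_inP H] K KS.
have := H K KS; rewrite Fl => /eqP.
rewrite (FV' (X * J)%g K) ?mul1r //.
by apply/eqP; rewrite Fsym; apply/eqP; exact: HJ.
Qed.
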